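(* Let $\Gamma$ be an octal game with finitely many nonzero code digits, and let $k$ be the largest index with $d_k\ne0$. Fix positive integers $n_0,p$ and let $M=2n_0+2p+k$. Let $\Phi_M:\mathscr{A}_M\to\mathcal{Q}_M$ be the quotient map of the partial quotient $(\mathcal{Q}_M,\mathcal{P}_M)=\mathcal{Q}_M(\Gamma)$, and suppose $\Phi_M(H_{n+p})=\Phi_M(H_n)$ for all $n$ with $n_0\le n<2n_0+p+k$. Then $\mathcal{Q}(\Gamma)\cong\mathcal{Q}_M(\Gamma)$ (via an isomorphism of bipartite monoids $\iota$ with $\iota(\Phi_M(X))=\Phi(X)$ for all $X\in\mathscr{A}_M$, where $\Phi$ is the quotient map of $\mathcal{Q}(\Gamma)$), and $\Phi(H_{n+p})=\Phi(H_n)$ for all $n\ge n_0$.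
   Context: Games are finite, loopfree impartial games identified with the finite set of their options; disjunctive sum $G+H=\{G'+H\}\cup\{G+H'\}$. Misère outcome: $o^-(G)=\mathscr{P}$ iff $G\neq0$ and every option has outcome $\mathscr{N}$; otherwise $\mathscr{N}$. A set of games is closed if it contains all options of its members and is closed under $+$. For a closed $\mathscr{A}$, $G\equiv_\mathscr{A}H$ iff $o^-(G+X)=o^-(H+X)$ for all $X\in\mathscr{A}$; the misère quotient $\mathcal{Q}(\mathscr{A})=(\mathcal{Q},\mathcal{P})$ consists of the commutative monoid $\mathcal{Q}$ of $\equiv_\mathscr{A}$-classes (with $[G][H]=[G+H]$, identity $[0]$) and the subset $\mathcal{P}$ of classes of misère $\mathscr{P}$-positions; $\Phi(G)=[G]$ is the quotient map. A bipartite monoid is a pair (commutative monoid, subset); an isomorphism of bipartite monoids is a monoid isomorphism mapping the distinguished subset onto the distinguished subset. For any set $\mathscr{S}$ of games, $\mathrm{cl}(\mathscr{S})$ is the closure under addition of the set of all subpositions of members of $\mathscr{S}$. Octal game with code $0.d_1d_2\ldots$ ($0\le d_j<8$, $d_j=\epsilon_0+2\epsilon_1+4\epsilon_2$): $H_n$ is a strip of $n$ boxes; the options of $H_n$ come from removing $j\ge1$ boxes: to $0$ if $n=j$ and $\epsilon_0=1$; to $H_{n-j}$ with $n-j\ge1$ if $\epsilon_1=1$; to $H_a+H_b$ with $a,b\ge1$, $a+b=n-j$ if $\epsilon_2=1$. Then $\mathscr{A}=\mathrm{cl}(\{H_0,H_1,\ldots\})$, $\mathcal{Q}(\Gamma)=\mathcal{Q}(\mathscr{A})$,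 $\mathscr{A}_n=\mathrm{cl}(\{H_0,\ldots,H_n\})$, and the partial quotient is $\mathcal{Q}_n(\Gamma)=\mathcal{Q}(\mathscr{A}_n)$ with quotient map $\Phi_n$. *)

(* Defs.v *)
From Stdlib Require List.
From mathcomp Require Import all_boot.
Set Implicit Arguments. Unset Strict Implicit. Unset Printing Implicit Defensive.

(* Finite loopfree impartial games, represented by the (finite) list of options. *)
Inductive game : Type := Game of seq game.

Definition zero_game : game := Game [::].

Definition options (G : game) : seq game := let: Game gs := G in gs.

Fixpoint gsum (G : game) : game -> game :=
  fix inner (H : game) : game :=
    match G, H with
    | Game gs, Game hs =>
        Game ([seq gsum g (Game hs) | g <- gs] ++ [seq inner h | h <- hs])
    end.

(* misère P-position: G <> 0 and every option is an N-position *)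
Fixpoint isP (G : game) : bool :=
  match G with
  | Game gs => ~~ nilp gs && all (fun g => ~~ isP g) gs
  end.

Inductive subpos : game -> game -> Prop :=
  | subpos_refl G : subpos G G
  | subpos_opt G g H : List.In g (options G) -> subpos H g -> subpos H G.

Inductive cl (S : game -> Prop) : game -> Prop :=
  | cl_sub G H : S G -> subpos H G -> cl S H
  | cl_sum G H : cl S G -> cl S H -> cl S (gsum G H).

Definition equivA (A : game -> Prop) (G H : game) : Prop :=
  forall X, A X -> isP (gsum G X) = isP (gsum H X).

(* the class [X] of X (X in A) belongs to the distinguished subset P of Q(A) *)
Definition inPclass (A : game -> Prop) (X : game) : Prop :=
  exists Y, [/\ A Y, equivA A X Y & isP Y].

(* iota : game -> game, acting on representatives, induces an isomorphism of
   bipartite monoids Q(A) -> Q(B) (quotients presented as setoids: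
   carrier = members of A, equality = equivA A). *)
Definition bip_iso (A B : game -> Prop) (iota : game -> game) : Prop :=
  [/\ (forall X, A X -> B (iota X)),
      (* well defined on classes and injective *)
      (forall X Y, A X -> A Y -> (equivA A X Y <-> equivA B (iota X) (iota Y))),
      (forall Z, B Z -> exists X, A X /\ equivA B (iota X) Z),
      (forall X Y, A X -> A Y -> equivA B (iota (gsum X Y)) (gsum (iota X) (iota Y)))
        /\ equivA B (iota zero_game) zero_game
    &
      (forall X, A X -> (inPclass A X <-> inPclass B (iota X)))].

(* Octal games.  The code 0.d_1 d_2 ... is given by d : nat -> nat (d 0 unused). *)
Definition eps0 (dj : nat) : bool := odd dj.
Definition eps1 (dj : nat) : bool := odd dj./2.
Definition eps2 (dj : nat) : bool := odd (dj./2)./2.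

(* options of H_n given prev = [:: H_0; ...; H_{n-1}] *)
Definition mkH (d : nat -> nat) (n : nat) (prev : seq game) : game :=
  let Hp i := nth zero_game prev i in
  Game (flatten [seq
     (if eps0 (d j) && (j == n) then [:: zero_game] else [::]) ++
     (if eps1 (d j) && (j < n) then [:: Hp (n - j)] else [::]) ++
     (if eps2 (d j)
      then [seq gsum (Hp a) (Hp (n - j - a)) | a <- iota 1 (n - j).-1]
      else [::])
   | j <- iota 1 n]).

Fixpoint Hlist (d : nat -> nat) (n : nat) : seq game :=
  match n with
  | 0 => [:: mkH d 0 [::]]
  | m.+1 => rcons (Hlist d m) (mkH d m.+1 (Hlist d m))
  end.

Definition Hn (d : nat -> nat) (n : nat) : game := nth zero_game (Hlist d n) n.

Definition Aoct (d : nat -> nat) : game -> Prop := cl (fun G => exists n, G = Hn d n).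
Definition Aoct_n (d : nat -> nat) (m : nat) : game -> Prop :=
  cl (fun G => exists n, n <= m /\ G = Hn d n).

(* Main.v *)
Require Import Defs.
From mathcomp Require Import all_boot zify.
From Stdlib Require List.
Set Implicit Arguments. Unset Strict Implicit.


Definition game_ind2 (P : game -> Prop)
  (IH : forall gs, (forall g, List.In g gs -> P g) -> P (Game gs)) : forall G, P G :=
  fix F G := match G with Game gs => IH gs
   ((fix aux (l : seq game) : forall g, List.In g l -> P g :=
      match l with
      | nil => fun g H => False_ind _ H
      | cons h t => fun g H => match H with
           | or_introl e => eq_ind h P (F h) g e
           | or_intror H' => aux t g H' end end) gs) end.

Lemma In_map' (A B : Type) (f : A -> B) (l : seq A) y :
  List.In y (seq.map f l) <-> exists x, y = f x /\ List.In x l.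
Proof.
elim: l y => [|a l IH] y /=; first by split => [[]|[x [_ []]]].
split.
- case=> [<-|Hy]; first by exists a; auto.
  by have [x [-> Hx]] := proj1 (IH y) Hy; exists x; auto.
- case=> x [-> [<-|Hx]]; first by left.
  by right; apply/IH; exists x.
Qed.

Lemma In_cat' (A : Type) (l1 l2 : seq A) x :
  List.In x (l1 ++ l2) <-> List.In x l1 \/ List.In x l2.
Proof. exact: List.in_app_iff. Qed.

Lemma opts_gsum G H : options (gsum G H) =
  seq.map (fun g => gsum g H) (options G) ++ seq.map (gsum G) (options H).
Proof. by case: G => gs; case: H. Qed.

Lemma In_gsum G H u : List.In u (options (gsum G H)) <->
  (exists g, u = gsum g H /\ List.In g (options G)) \/
  (exists h, u = gsum G h /\ List.In h (options H)).
Proof. by rewrite opts_gsum In_cat' !In_map'. Qed.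

Lemma all_In (A : Type) (p : pred A) (l : seq A) :
  all p l <-> forall x, List.In x l -> p x.
Proof.
elim: l => [|a l IH] //=; split.
- by case/andP=> pa /IH pl x [<-|]; auto.
- by move=> H; rewrite H /=; [apply/IH => x Hx; apply: H; right|left].
Qed.

Lemma isP_iff G : isP G <-> options G <> [::] /\ forall g, List.In g (options G) -> isP g = false.
Proof.
case: G => gs /=; split.
- case/andP=> ne /all_In Ha; split; first by move=> E; rewrite E in ne.
  by move=> g /Ha /negbTE.
- case=> ne Ha; apply/andP; split; first by move: ne; case: (gs).
  by apply/all_In => x /Ha ->.
Qed.

Lemma outcome_transfer U V :
  (options U = [::] <-> options V = [::]) ->
  ((exists u, List.In u (options U) /\ isP u) <-> (exists v, List.In v (options V) /\ isP v)) ->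
  isP U = isP V.
Proof.
move=> Hn He; apply/idP/idP => /isP_iff [ne Ha]; apply/isP_iff; split.
- by move/Hn.
- move=> g Hg; apply/negbTE/negP => Pg.
  have [u [Hu Pu]] : exists u, List.In u (options U) /\ isP u by apply/He; exists g.
  by rewrite Ha in Pu.
- by move/Hn.
- move=> g Hg; apply/negbTE/negP => Pg.
  have [u [Hu Pu]] : exists u, List.In u (options V) /\ isP u by apply/He; exists g.
  by rewrite Ha in Pu.
Qed.

Inductive bis : game -> game -> Prop :=
  bisI gs hs : (forall g, List.In g gs -> exists2 h, List.In h hs & bis g h) ->
               (forall h, List.In h hs -> exists2 g, List.In g gs & bis g h) ->
               bis (Game gs) (Game hs).

Lemma bis_opts G H : bis G H ->
  (forall g, List.In g (options G) -> exists2 h, List.In h (options H) & bis g h) /\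
  (forall h, List.In h (options H) -> exists2 g, List.In g (options G) & bis g h).
Proof. by case. Qed.

Lemma bis_intro G H :
  (forall g, List.In g (options G) -> exists2 h, List.In h (options H) & bis g h) ->
  (forall h, List.In h (options H) -> exists2 g, List.In g (options G) & bis g h) -> bis G H.
Proof. by case: G => gs; case: H => hs; apply: bisI. Qed.

Lemma bis_refl G : bis G G.
Proof.
elim/game_ind2: G => gs IH; apply: bisI => g Hg; exists g; auto.
Qed.

Lemma bis_sym G H : bis G H -> bis H G.
Proof.
elim/game_ind2: G H => gs IH H /bis_opts [H1 H2]; apply: bis_intro => /=.
- by move=> h /H2 [g Hg Hb]; exists g => //; exact: IH Hg _ Hb.
- by move=> g Hg; have [h Hh Hb] := H1 g Hg; exists h => //; exact: IH Hg _ Hb.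
Qed.

Lemma bis_trans G H K : bis G H -> bis H K -> bis G K.
Proof.
elim/game_ind2: G H K => gs IH H K /bis_opts [H1 H2] /bis_opts [K1 K2].
apply: bis_intro => /=.
- move=> g Hg; have [h /K1 [k Hk Hhk] Hgh] := H1 g Hg; exists k => //; exact: IH Hg _ _ Hgh Hhk.
- move=> k /K2 [h /H2 [g Hg Hgh] Hhk]; exists g => //; exact: IH Hg _ _ Hgh Hhk.
Qed.

Lemma isP_bis G H : bis G H -> isP G = isP H.
Proof.
elim/game_ind2: G H => gs IH H Hb; have [H1 H2] := bis_opts Hb.
apply: outcome_transfer => /=.
- split.
  + move=> e; case E: (options H) => [|h l] //.
    have Hh : List.In h (options H) by rewrite E; left.
    have [g Hg _] := H2 h Hh.
    by rewrite /= e in Hg.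
  + move=> e; case: gs IH H1 H2 {Hb} => [|g l] // IH H1 H2.
    by have [h Hh _] := H1 g (or_introl erefl); rewrite e in Hh.
- split.
  + case=> g [Hg Pg]; have [h Hh Hgh] := H1 g Hg; exists h; split => //.
    by rewrite -(IH g Hg h Hgh).
  + case=> h [Hh Ph]; have [g Hg Hgh] := H2 h Hh; exists g; split => //.
    by rewrite (IH g Hg h Hgh).
Qed.

Lemma gsum_bis G G' H H' : bis G G' -> bis H H' -> bis (gsum G H) (gsum G' H').
Proof.
elim/game_ind2: G G' H H' => gs IHG G' H H' HG.
elim/game_ind2: H H' => hs IHH H' HH.
have [G1 G2] := bis_opts HG; have [H1 H2] := bis_opts HH.
apply: bis_intro.
- move=> u /In_gsum [[g [-> Hg]]|[h [-> Hh]]].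
  + have [g' Hg' Hb] := G1 g Hg; exists (gsum g' H').
      by apply/In_gsum; left; exists g'.
    exact: IHG.
  + have [h' Hh' Hb] := H1 h Hh; exists (gsum G' h').
      by apply/In_gsum; right; exists h'.
    exact: IHH.
- move=> u /In_gsum [[g' [-> Hg']]|[h' [-> Hh']]].
  + have [g Hg Hb] := G2 g' Hg'; exists (gsum g (Game hs)).
      by apply/In_gsum; left; exists g.
    exact: IHG.
  + have [h Hh Hb] := H2 h' Hh'; exists (gsum (Game gs) h).
      by apply/In_gsum; right; exists h.
    exact: IHH.
Qed.

Lemma gsum_comm G H : bis (gsum G H) (gsum H G).
Proof.
elim/game_ind2: G H => gs IHG H.
elim/game_ind2: H => hs IHH.
apply: bis_intro.
- move=> u /In_gsum [[g [-> Hg]]|[h [-> Hh]]].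
  + exists (gsum (Game hs) g); first by apply/In_gsum; right; exists g.
    exact: IHG.
  + exists (gsum h (Game gs)); first by apply/In_gsum; left; exists h.
    exact: IHH.
- move=> u /In_gsum [[h [-> Hh]]|[g [-> Hg]]].
  + exists (gsum (Game gs) h); first by apply/In_gsum; right; exists h.
    exact: IHH.
  + exists (gsum g (Game hs)); first by apply/In_gsum; left; exists g.
    exact: IHG.
Qed.

Lemma gsum_assoc G H K : bis (gsum (gsum G H) K) (gsum G (gsum H K)).
Proof.
elim/game_ind2: G H K => gs IHG H K.
elim/game_ind2: H K => hs IHH K.
elim/game_ind2: K => ks IHK.
apply: bis_intro.
- move=> u /In_gsum [[v [-> /In_gsum [[g [-> Hg]]|[h [-> Hh]]]]]|[k [-> Hk]]].
  + exists (gsum g (gsum (Game hs) (Game ks))); first by apply/In_gsum; left; exists g.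
    exact: IHG.
  + exists (gsum (Game gs) (gsum h (Game ks))).
      by apply/In_gsum; right; exists (gsum h (Game ks)); split => //; apply/In_gsum; left; exists h.
    exact: IHH.
  + exists (gsum (Game gs) (gsum (Game hs) k)).
      by apply/In_gsum; right; exists (gsum (Game hs) k); split => //; apply/In_gsum; right; exists k.
    exact: IHK.
- move=> u /In_gsum [[g [-> Hg]]|[v [-> /In_gsum [[h [-> Hh]]|[k [-> Hk]]]]]].
  + exists (gsum (gsum g (Game hs)) (Game ks)).
      by apply/In_gsum; left; exists (gsum g (Game hs)); split => //; apply/In_gsum; left; exists g.
    exact: IHG.
  + exists (gsum (gsum (Game gs) h) (Game ks)).
      by apply/In_gsum; left; exists (gsum (Game gs) h); split => //; apply/In_gsum; right; exists h.
    exact: IHH.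
  + exists (gsum (gsum (Game gs) (Game hs)) k); first by apply/In_gsum; right; exists k.
    exact: IHK.
Qed.

Lemma gsum_zero G : bis (gsum G zero_game) G.
Proof.
elim/game_ind2: G => gs IHG; apply: bis_intro.
- move=> u /In_gsum [[g [-> Hg]]|[h [-> []]]].
  by exists g => //; apply: IHG.
- move=> g Hg; exists (gsum g zero_game); last by apply: IHG.
  by apply/In_gsum; left; exists g.
Qed.

Lemma gsum_swap a b c : bis (gsum a (gsum b c)) (gsum b (gsum a c)).
Proof.
apply: bis_trans (bis_sym (gsum_assoc _ _ _)) _.
apply: bis_trans (gsum_assoc _ _ _).
apply: gsum_bis (gsum_comm _ _) (bis_refl _).
Qed.

Lemma gsum_rot a b c : bis (gsum (gsum a b) c) (gsum b (gsum a c)).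
Proof. exact: bis_trans (gsum_assoc _ _ _) (gsum_swap _ _ _). Qed.

Fixpoint gmul (n : nat) (G : game) : game :=
  if n is m.+1 then gsum G (gmul m G) else zero_game.

Lemma gmul_opts n G u : List.In u (options (gmul n.+1 G)) ->
  exists2 g, List.In g (options G) & bis u (gsum g (gmul n G)).
Proof.
elim: n u => [|n IH] u.
  move=> /In_gsum [[g [-> Hg]]|[h [_ []]]]; exists g => //; exact: bis_refl.
move=> /In_gsum [[g [-> Hg]]|[h [-> Hh]]]; first by exists g => //; exact: bis_refl.
have [g Hg Hb] := IH h Hh; exists g => //.
apply: bis_trans (gsum_bis (bis_refl G) Hb) _.
exact: gsum_swap.
Qed.

Lemma gmul_opt_in n G g : List.In g (options G) ->
  List.In (gsum g (gmul n G)) (options (gmul n.+1 G)).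
Proof. by move=> Hg; apply/In_gsum; left; exists g. Qed.

Lemma opts_gsum_nil G H : options (gsum G H) = [::] <-> options G = [::] /\ options H = [::].
Proof.
rewrite opts_gsum; case: (options G) => [|g l]; case: (options H) => [|h l'] //=; by split => // [[]].
Qed.

Lemma gmul_nil n G : options (gmul n.+1 G) = [::] <-> options G = [::].
Proof.
split.
- by move/opts_gsum_nil => [].
- move=> e; elim: n => [|n IH]; apply/opts_gsum_nil; split => //.
Qed.

Definition closedA (A : game -> Prop) :=
  [/\ A zero_game, (forall G H, A G -> A H -> A (gsum G H)) &
      (forall G g, A G -> List.In g (options G) -> A g)].

Lemma gmul_in A n G : closedA A -> A G -> A (gmul n G).
Proof. by case=> A0 As _ AG; elim: n => //= n IH; apply: As. Qed.

Lemma equivA_refl A U : equivA A U U. Proof. by []. Qed.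
Lemma equivA_sym A U V : equivA A U V -> equivA A V U.
Proof. by move=> h X AX; rewrite h. Qed.
Lemma equivA_trans A U V W : equivA A U V -> equivA A V W -> equivA A U W.
Proof. by move=> h1 h2 X AX; rewrite h1 // h2. Qed.
Lemma equivA_bis A U V : bis U V -> equivA A U V.
Proof. by move=> b X _; apply: isP_bis; apply: gsum_bis b (bis_refl _). Qed.

Lemma equivA_sumr A U V W : closedA A -> A W -> equivA A U V ->
  equivA A (gsum U W) (gsum V W).
Proof.
case=> _ As _ AW h X AX.
rewrite (isP_bis (gsum_assoc _ _ _)) (isP_bis (gsum_assoc V _ _)).
exact: h (As _ _ AW AX).
Qed.

Lemma equivA_suml A U V W : closedA A -> A W -> equivA A U V ->
  equivA A (gsum W U) (gsum W V).
Proof.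
move=> cA AW h.
apply: equivA_trans (equivA_bis (gsum_comm _ _)) _.
apply: equivA_trans (equivA_sumr cA AW h) _.
exact: equivA_bis (gsum_comm _ _).
Qed.

Lemma equivA_isP A U V : A zero_game -> equivA A U V -> isP U = isP V.
Proof.
move=> A0 h; move: (h _ A0).
by rewrite (isP_bis (gsum_zero U)) (isP_bis (gsum_zero V)).
Qed.

Section Step.
Variables (A : game -> Prop) (G X : game).
Hypothesis cA : closedA A.
Hypothesis AX : A X.
Hypothesis AoG : forall g, List.In g (options G) -> A g.
Hypothesis corr1 : forall g, List.In g (options G) ->
  exists2 x, List.In x (options X) & equivA A g x.
Hypothesis corr2 : forall x, List.In x (options X) ->
  exists2 g, List.In g (options G) & equivA A g x.

Lemma nilGX : options G = [::] <-> options X = [::].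
Proof.
split => e.
- case E: (options X) => [|x l] //.
  have Hx : List.In x (options X) by rewrite E; left.
  by have [g] := corr2 Hx; rewrite e.
- case E: (options G) => [|g l] //.
  have Hg : List.In g (options G) by rewrite E; left.
  by have [x] := corr1 Hg; rewrite e.
Qed.

Lemma Tlemma n Z : A Z -> isP (gsum Z (gmul n G)) = isP (gsum Z (gmul n X)).
Proof.
have [A0 As Ao] := cA.
elim: n Z => [//|n IHn] Z.
elim/game_ind2: Z => zs IHZ AZ.
have AmX := gmul_in n cA AX.
apply: outcome_transfer.
- split; move/opts_gsum_nil => [h1 /gmul_nil h2]; apply/opts_gsum_nil; split => //;
    apply/gmul_nil; apply/nilGX => //.
- split.
  + move=> [u [/In_gsum [[z [-> Hz]]|[w [-> Hw]]] Pu]].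
    * exists (gsum z (gmul n.+1 X)); split; first by apply/In_gsum; left; exists z.
      by rewrite -(IHZ z Hz (Ao _ _ AZ Hz)).
    * have [g Hg Hb] := gmul_opts Hw.
      have [x Hx Hgx] := corr1 Hg.
      exists (gsum (Game zs) (gsum x (gmul n X))); split.
        by apply/In_gsum; right; exists (gsum x (gmul n X)); split => //; apply: gmul_opt_in.
      rewrite (isP_bis (gsum_bis (bis_refl _) Hb)) in Pu.
      rewrite (isP_bis (bis_sym (gsum_assoc _ _ _))) IHn in Pu; last by apply: As => //; apply: AoG.
      rewrite (isP_bis (gsum_rot _ _ _)) Hgx in Pu; last by apply: As.
      by rewrite (isP_bis (gsum_swap _ _ _)).
  + move=> [u [/In_gsum [[z [-> Hz]]|[w [-> Hw]]] Pu]].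
    * exists (gsum z (gmul n.+1 G)); split; first by apply/In_gsum; left; exists z.
      by rewrite (IHZ z Hz (Ao _ _ AZ Hz)).
    * have [x Hx Hb] := gmul_opts Hw.
      have [g Hg Hgx] := corr2 Hx.
      exists (gsum (Game zs) (gsum g (gmul n G))); split.
        by apply/In_gsum; right; exists (gsum g (gmul n G)); split => //; apply: gmul_opt_in.
      rewrite (isP_bis (gsum_bis (bis_refl _) Hb)) in Pu.
      rewrite (isP_bis (gsum_swap _ _ _)) -Hgx in Pu; last by apply: As.
      rewrite -(isP_bis (gsum_rot _ _ _)) -IHn in Pu; last by apply: As => //; apply: AoG.
      by rewrite (isP_bis (gsum_assoc _ _ _)) in Pu.
Qed.

Variable B : game -> Prop.
Hypothesis repB : forall Y, B Y -> exists Z n, A Z /\ bis Y (gsum Z (gmul n G)).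

Lemma step_lift U V : A U -> A V -> equivA A U V -> equivA B U V.
Proof.
have [A0 As Ao] := cA.
move=> AU AV h Y /repB [Z [n [AZ Hb]]].
have AmX := gmul_in n cA AX.
have e W : A W -> isP (gsum W Y) = isP (gsum W (gsum Z (gmul n X))).
  move=> AW; rewrite (isP_bis (gsum_bis (bis_refl _) Hb)).
  rewrite (isP_bis (bis_sym (gsum_assoc _ _ _))) Tlemma; last by apply: As.
  by rewrite (isP_bis (gsum_assoc _ _ _)).
by rewrite e // e // h //; apply: As.
Qed.

Lemma step_GX : equivA B G X.
Proof.
have [A0 As Ao] := cA.
move=> Y /repB [Z [n [AZ Hb]]].
have AmX := gmul_in n cA AX.
rewrite (isP_bis (gsum_bis (bis_refl _) Hb)) (isP_bis (gsum_bis (bis_refl X) Hb)).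
rewrite (isP_bis (gsum_swap _ _ _)).
have -> : gsum G (gmul n G) = gmul n.+1 G by [].
rewrite (@Tlemma n.+1 Z AZ) /= (isP_bis (gsum_swap _ _ _)).
rewrite [RHS](isP_bis (bis_sym (gsum_assoc X Z (gmul n G)))) (@Tlemma n (gsum X Z)); last by apply: As.
by rewrite (isP_bis (gsum_assoc X Z _)).
Qed.

End Step.

Section Oct.
Variable d : nat -> nat.

Lemma Hn0 : Hn d 0 = zero_game. Proof. by []. Qed.

Lemma size_Hlist m : size (Hlist d m) = m.+1.
Proof. by elim: m => //= m IH; rewrite size_rcons IH. Qed.

Lemma Hlist_nth m i : i <= m -> nth zero_game (Hlist d m) i = Hn d i.
Proof.
elim: m i => [|m IH] i; first by rewrite leqn0 => /eqP ->.
rewrite leq_eqVlt => /orP [/eqP ->|lt] //.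
rewrite /= nth_rcons size_Hlist lt; exact: IH.
Qed.

Lemma Hn_succ m : Hn d m.+1 = mkH d m.+1 (Hlist d m).
Proof. by rewrite /Hn /= nth_rcons size_Hlist ltnn eqxx. Qed.

Lemma In_mem (l : seq nat) x : List.In x l <-> x \in l.
Proof.
elim: l => [|a l IH] //=; rewrite inE; split.
- by case=> [->|/IH ->]; rewrite ?eqxx ?orbT.
- by case/orP => [/eqP ->|/IH]; auto.
Qed.

Lemma In_flatten (A : Type) (ss : seq (seq A)) x :
  List.In x (flatten ss) <-> exists2 s, List.In s ss & List.In x s.
Proof.
elim: ss => [|s ss IH] /=; first by split => // [[s []]].
rewrite In_cat' IH; split.
- case=> [h|[s' h1 h2]]; first by exists s; auto.
  by exists s'; auto.
- by case=> s' [<-|h1] h2; [left|right; exists s'].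
Qed.

Definition optH m u := exists2 j, 0 < j <= m &
  [\/ [/\ eps0 (d j), j = m & u = zero_game],
      [/\ eps1 (d j), j < m & u = Hn d (m - j)] |
      eps2 (d j) /\ exists a, 0 < a < m - j /\ u = gsum (Hn d a) (Hn d (m - j - a))].

Lemma In_if (A : Type) (b : bool) (l : seq A) x : List.In x (if b then l else [::]) <-> b /\ List.In x l.
Proof. by case: b; split => // [[]]. Qed.

Lemma opts_Hn m u : List.In u (options (Hn d m)) <-> optH m u.
Proof.
case: m => [|m]; first by split => // [[j /andP [j0 jm]]]; lia.
rewrite Hn_succ /mkH (_ : forall l, options (Game l) = l) // In_flatten; split.
- case=> s /In_map' [j [-> /In_mem]]; rewrite mem_iota => /andP [j1 j2].
  rewrite !In_cat' !In_if => Hu; exists j; first by apply/andP; split; lia.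
  case: Hu => [[/andP [e0 /eqP ej] [<-|[]]]|[[/andP [e1 jl] [<-|[]]]|[e2 /In_map' [a [-> /In_mem]]]]].
  + by apply: Or31.
  + by apply: Or32; split => //; rewrite Hlist_nth //; lia.
  + rewrite mem_iota => /andP [a1 a2]; apply: Or33; split => //; exists a; split; first lia.
    by rewrite !Hlist_nth //; lia.
- case=> j /andP [j1 j2] Hc.
  exists (((if eps0 (d j) && (j == m.+1) then [:: zero_game] else [::]) ++
     (if eps1 (d j) && (j < m.+1) then [:: nth zero_game (Hlist d m) (m.+1 - j)] else [::]) ++
     (if eps2 (d j)
      then [seq gsum (nth zero_game (Hlist d m) a) (nth zero_game (Hlist d m) (m.+1 - j - a)) | a <- iota 1 (m.+1 - j).-1]
      else [::]))).
    by apply/In_map'; exists j; split => //; apply/In_mem; rewrite mem_iota; apply/andP; split; lia.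
  rewrite !In_cat' !In_if; case: Hc => [[e0 ej ->]|[e1 jl ->]|[e2 [a [ha ->]]]].
  + by left; split; [rewrite e0 ej eqxx|left].
  + right; left; split; first by rewrite e1 jl.
    by left; rewrite Hlist_nth //; lia.
  + right; right; split => //; apply/In_map'; exists a; split.
      by rewrite !Hlist_nth //; lia.
    by apply/In_mem; rewrite mem_iota; apply/andP; split; lia.
Qed.

Lemma subpos_step H G g : subpos H G -> List.In g (options H) -> subpos g G.
Proof.
elim => [G0|G0 g0 H0 Hin _ IH] Hg.
- exact: subpos_opt Hg (subpos_refl g).
- exact: subpos_opt Hin (IH Hg).
Qed.

Lemma cl_opts (S : game -> Prop) G g : cl S G -> List.In g (options G) -> cl S g.
Proof.
move=> c; elim: c g => [G0 H0 SG sp|G0 H0 c1 IH1 c2 IH2] g Hg.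
- exact: cl_sub SG (subpos_step sp Hg).
- case/In_gsum: Hg => [[g' [-> Hg']]|[h' [-> Hh']]]; apply: cl_sum => //; auto.
Qed.

Lemma closedA_cl (S : game -> Prop) : cl S zero_game -> closedA (cl S).
Proof. move=> z; split => //; [exact: cl_sum| exact: cl_opts]. Qed.

Lemma cl_mono (S S' : game -> Prop) G : (forall x, S x -> S' x) -> cl S G -> cl S' G.
Proof.
move=> h; elim => [G0 H0 SG sp|G0 H0 _ IH1 _ IH2]; first exact: cl_sub (h _ SG) sp.
exact: cl_sum.
Qed.

Lemma An_mono N N' G : N <= N' -> Aoct_n d N G -> Aoct_n d N' G.
Proof. move=> le; apply: cl_mono => x [n [hn ->]]; exists n; split => //; lia. Qed.

Lemma An_A N G : Aoct_n d N G -> Aoct d G.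
Proof. by apply: cl_mono => x [n [_ ->]]; exists n. Qed.

Lemma A_An G : Aoct d G -> exists N, Aoct_n d N G.
Proof.
elim => [G0 H0 [n ->] sp|G0 H0 _ [N1 h1] _ [N2 h2]].
- by exists n; apply: cl_sub sp; exists n.
- exists (maxn N1 N2); apply: cl_sum; [apply: An_mono h1|apply: An_mono h2]; lia.
Qed.

Lemma H_An N i : i <= N -> Aoct_n d N (Hn d i).
Proof. by move=> h; apply: cl_sub (subpos_refl _); exists i. Qed.

Lemma closed_An N : closedA (Aoct_n d N).
Proof. by apply: closedA_cl; rewrite -Hn0; apply: H_An. Qed.

Lemma closed_A : closedA (Aoct d).
Proof. by apply: closedA_cl; apply: cl_sub (subpos_refl _); exists 0. Qed.

Lemma opts_Hsucc_in m g : List.In g (options (Hn d m.+1)) -> Aoct_n d m g.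
Proof.
case/opts_Hn => j /andP [j1 j2] [[_ _ ->]|[_ _ ->]|[_ [a [ha ->]]]].
- by rewrite -Hn0; apply: H_An.
- by apply: H_An; lia.
- by apply: cl_sum; apply: H_An; lia.
Qed.

Inductive Acl (N : nat) : game -> Prop :=
  | Acl_gen i : i <= N -> Acl N (Hn d i)
  | Acl_sum G H : Acl N G -> Acl N H -> Acl N (gsum G H).

Lemma Acl_mono N N' G : N <= N' -> Acl N G -> Acl N' G.
Proof.
move=> le; elim => [i hi|G0 H0 _ IH1 _ IH2]; last exact: Acl_sum.
by apply: Acl_gen; lia.
Qed.

Lemma subpos_gsum Z Y : subpos Z Y -> forall G K, Y = gsum G K ->
  exists G' K', [/\ subpos G' G, subpos K' K & Z = gsum G' K'].
Proof.
elim => [Y0|Y0 g H0 Hin _ IH] G K E.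
- by exists G, K; split => //; apply: subpos_refl.
- move: Hin; rewrite E => /In_gsum [[g' [eg Hg']]|[k' [ek Hk']]].
  + have [G' [K' [s1 s2 ->]]] := IH _ _ eg.
    by exists G', K'; split => //; apply: subpos_opt Hg' s1.
  + have [G' [K' [s1 s2 ->]]] := IH _ _ ek.
    by exists G', K'; split => //; apply: subpos_opt Hk' s2.
Qed.

Lemma subpos_zero Z : subpos Z zero_game -> Z = zero_game.
Proof. move=> h; inversion h as [|Y g H0 Hin sp]; first by []. by case: Hin. Qed.

Lemma subpos_H i Z : subpos Z (Hn d i) -> Acl i Z.
Proof.
elim: i {-2}i (leqnn i) Z => [|i IH] i' hi Z.
- have -> : i' = 0 by lia.
  by move/subpos_zero ->; rewrite -Hn0; apply: Acl_gen.
- inversion 1 as [|Y g H0 Hin sp]; first by apply: Acl_gen.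
  case/opts_Hn: Hin => j /andP [j1 j2] [[_ _ eg]|[_ _ eg]|[_ [a [ha eg]]]].
  + by move: sp; rewrite eg => /subpos_zero ->; rewrite -Hn0; apply: Acl_gen.
  + by move: sp; rewrite eg => /(IH (i' - j)) h; apply: Acl_mono (h _); lia.
  + have [G' [K' [s1 s2 ->]]] := subpos_gsum sp eg.
    apply: Acl_sum.
    * by apply: Acl_mono (IH a _ _ s1); lia.
    * by apply: Acl_mono (IH (i' - j - a) _ _ s2); lia.
Qed.

Lemma An_Acl N Z : Aoct_n d N Z -> Acl N Z.
Proof.
elim => [G0 H0 [n [hn ->]] sp|G0 H0 _ IH1 _ IH2]; last exact: Acl_sum.
by apply: Acl_mono (subpos_H sp).
Qed.

Lemma gmul_add a b G : bis (gsum (gmul a G) (gmul b G)) (gmul (a + b) G).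
Proof.
elim: a => [|a IH] /=.
  exact: bis_trans (gsum_comm _ _) (gsum_zero _).
apply: bis_trans (gsum_assoc _ _ _) _.
exact: gsum_bis (bis_refl _) IH.
Qed.

Lemma gsum_perm4 a b c e : bis (gsum (gsum a b) (gsum c e)) (gsum (gsum a c) (gsum b e)).
Proof.
apply: bis_trans (gsum_assoc _ _ _) _.
apply: bis_trans _ (bis_sym (gsum_assoc _ _ _)).
exact: gsum_bis (bis_refl _) (gsum_swap _ _ _).
Qed.

Lemma repr_succ N Y : Aoct_n d N.+1 Y ->
  exists Z n, Aoct_n d N Z /\ bis Y (gsum Z (gmul n (Hn d N.+1))).
Proof.
move/An_Acl; elim => [i hi|G0 H0 _ [Z1 [n1 [A1 b1]]] _ [Z2 [n2 [A2 b2]]]].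
- case: (ltnP i N.+1) => hi'.
  + exists (Hn d i), 0; split; first by apply: H_An; lia.
    exact: bis_sym (gsum_zero _).
  + have -> : i = N.+1 by lia.
    exists zero_game, 1; split; first by rewrite -Hn0; apply: H_An.
    apply: bis_sym; apply: bis_trans (gsum_comm _ _) _.
    apply: bis_trans (gsum_zero _) _; exact: gsum_zero.
- exists (gsum Z1 Z2), (n1 + n2); split; first by apply: cl_sum.
  apply: bis_trans (gsum_bis b1 b2) _.
  apply: bis_trans (gsum_perm4 _ _ _ _) _.
  exact: gsum_bis (bis_refl _) (gmul_add _ _ _).
Qed.

End Oct.

Section Main.
Variables (d : nat -> nat) (k n0 p : nat).
Hypothesis dk0 : forall j, k < j -> d j = 0.
Hypothesis n0pos : 0 < n0.
Hypothesis ppos : 0 < p.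
Let M := 2 * n0 + 2 * p + k.

Definition aP N := forall n, n0 <= n -> n + p <= N ->
  equivA (Aoct_n d N) (Hn d (n + p)) (Hn d n).

Lemma optH_small m u : k < m -> optH d m u -> exists2 j, 0 < j <= k &
  [\/ [/\ eps0 (d j), j = m & u = zero_game],
      [/\ eps1 (d j), j < m & u = Hn d (m - j)] |
      eps2 (d j) /\ exists a, 0 < a < m - j /\ u = gsum (Hn d a) (Hn d (m - j - a))].
Proof.
move=> km [j /andP [j1 j2] Hc]; exists j => //; apply/andP; split => //.
case: (leqP j k) => // jk; move: Hc; rewrite dk0 //.
by case=> [[]|[]|[]].
Qed.

Lemma corr N : M <= N.+1 -> aP N ->
  (forall g, List.In g (options (Hn d N.+1)) ->
     exists2 x, List.In x (options (Hn d (N.+1 - p))) & equivA (Aoct_n d N) g x) /\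
  (forall x, List.In x (options (Hn d (N.+1 - p))) ->
     exists2 g, List.In g (options (Hn d N.+1)) & equivA (Aoct_n d N) g x).
Proof.
rewrite /M => hM aN; have cA := closed_An d N; split.
- move=> g /opts_Hn /optH_small [|j /andP [j1 j2] Hc]; first lia.
  case: Hc => [[_ e _]|[e1 jl ->]|[e2 [a [ha ->]]]]; first lia.
  + exists (Hn d (N.+1 - p - j)).
      apply/opts_Hn; exists j; first (apply/andP; split; lia).
      by apply: Or32; split => //; lia.
    have := aN (N.+1 - p - j) ltac:(lia) ltac:(lia).
    by have -> : N.+1 - p - j + p = N.+1 - j by lia.
  + case: (leqP (N.+1 - j - a) a) => hab.
    * exists (gsum (Hn d (a - p)) (Hn d (N.+1 - j - a))).
        apply/opts_Hn; exists j; first (apply/andP; split; lia).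
        apply: Or33; split => //; exists (a - p); split; first lia.
        by have -> : N.+1 - p - j - (a - p) = N.+1 - j - a by lia.
      apply: equivA_sumr => //; first by apply: H_An; lia.
      have := aN (a - p) ltac:(lia) ltac:(lia).
      by have -> : a - p + p = a by lia.
    * exists (gsum (Hn d a) (Hn d (N.+1 - j - a - p))).
        apply/opts_Hn; exists j; first (apply/andP; split; lia).
        apply: Or33; split => //; exists a; split; first lia.
        by have -> : N.+1 - p - j - a = N.+1 - j - a - p by lia.
      apply: equivA_suml => //; first by apply: H_An; lia.
      have := aN (N.+1 - j - a - p) ltac:(lia) ltac:(lia).
      by have -> : N.+1 - j - a - p + p = N.+1 - j - a by lia.
- move=> x /opts_Hn /optH_small [|j /andP [j1 j2] Hc]; first lia.
  case: Hc => [[_ e _]|[e1 jl ->]|[e2 [a [ha ->]]]]; first lia.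
  + exists (Hn d (N.+1 - j)).
      apply/opts_Hn; exists j; first (apply/andP; split; lia).
      by apply: Or32; split => //; lia.
    have := aN (N.+1 - p - j) ltac:(lia) ltac:(lia).
    by have -> : N.+1 - p - j + p = N.+1 - j by lia.
  + case: (leqP (N.+1 - p - j - a) a) => hab.
    * exists (gsum (Hn d (a + p)) (Hn d (N.+1 - p - j - a))).
        apply/opts_Hn; exists j; first (apply/andP; split; lia).
        apply: Or33; split => //; exists (a + p); split; first lia.
        by have -> : N.+1 - j - (a + p) = N.+1 - p - j - a by lia.
      apply: equivA_sumr => //; first by apply: H_An; lia.
      apply: aN; lia.
    * exists (gsum (Hn d a) (Hn d (N.+1 - p - j - a + p))).
        apply/opts_Hn; exists j; first (apply/andP; split; lia).
        apply: Or33; split => //; exists a; split; first lia.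
        by have -> : N.+1 - j - a = N.+1 - p - j - a + p by lia.
      apply: equivA_suml => //; first by apply: H_An; lia.
      apply: aN; lia.
Qed.

Lemma a_step N : M <= N.+1 -> aP N ->
  aP N.+1 /\ (forall U V, Aoct_n d N U -> Aoct_n d N V ->
     equivA (Aoct_n d N) U V -> equivA (Aoct_n d N.+1) U V).
Proof.
move=> hM aN; have [c1 c2] := corr hM aN.
have cA := closed_An d N.
have AX : Aoct_n d N (Hn d (N.+1 - p)) by apply: H_An; rewrite /M in hM; lia.
have AoG := @opts_Hsucc_in d N.
have rep := @repr_succ d N.
have lift := step_lift cA AX AoG c1 c2 rep.
split => // n h1 h2.
case: (leqP (n + p) N) => h3.
- apply: lift; try (apply: H_An; lia).
  exact: aN.
- have -> : n + p = N.+1 by lia.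
  have -> : n = N.+1 - p by lia.
  exact (step_GX cA AX AoG c1 c2 rep).
Qed.

Lemma equivA_sub (A A' : game -> Prop) U V : (forall x, A' x -> A x) ->
  equivA A U V -> equivA A' U V.
Proof. by move=> h e X /h; apply: e. Qed.

Hypothesis hyp : forall n, n0 <= n < 2 * n0 + p + k ->
     equivA (Aoct_n d M) (Hn d (n + p)) (Hn d n).

Lemma aP_all N : M <= N.+1 -> aP N.
Proof.
elim: N => [|N IH] hM.
  move=> n h1 h2; exfalso; rewrite /M in hM; lia.
case: (leqP M N.+1) => h.
- by have [] := a_step h (IH h).
- have e : N.+1 = M - 1 by lia.
  move=> n h1 h2; apply: equivA_sub (hyp _); first by move=> x; apply: An_mono; lia.
  by apply/andP; split; rewrite /M in e |- *; lia.
Qed.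

Lemma lift_all N U V : M <= N -> Aoct_n d M U -> Aoct_n d M V ->
  equivA (Aoct_n d M) U V -> equivA (Aoct_n d N) U V.
Proof.
move=> hN AU AV e; elim: N hN => [|N IH] hN.
  by exfalso; rewrite /M in hN; lia.
case: (ltnP M N.+1) => h.
- have [_ L] := a_step (ltnW h) (aP_all (ltnW h)).
  apply: L; try (apply: An_mono; last eassumption; lia).
  by apply: IH; lia.
- by have <- : M = N.+1 by lia.
Qed.

Lemma lift_inf U V : Aoct_n d M U -> Aoct_n d M V ->
  equivA (Aoct_n d M) U V -> equivA (Aoct d) U V.
Proof.
move=> AU AV e X /A_An [N AN].
have := lift_all (leq_maxl M N) AU AV e; apply.
by apply: An_mono AN; lia.
Qed.

Lemma per n : n0 <= n -> equivA (Aoct d) (Hn d (n + p)) (Hn d n).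
Proof.
move=> hn X /A_An [N AN].
set N' := maxn N (maxn (n + p) M).
apply: (aP_all (N := N')); try (rewrite /N'; lia).
by apply: An_mono AN; rewrite /N'; lia.
Qed.

Lemma gmul_equiv A n G X : closedA A -> A G -> A X -> equivA A G X ->
  equivA A (gmul n G) (gmul n X).
Proof.
move=> cA AG AX e; elim: n => //= n IH.
apply: equivA_trans (equivA_sumr cA (gmul_in n cA AG) e) _.
exact: equivA_suml cA AX IH.
Qed.

Lemma surj N Z : Aoct_n d N Z -> exists X, Aoct_n d M X /\ equivA (Aoct d) X Z.
Proof.
elim: N Z => [|N IH] Z AZ.
  by exists Z; split => //; apply: An_mono AZ; lia.
case: (leqP N.+1 M) => h.
  by exists Z; split => //; apply: An_mono AZ.
have [W [n [AW b]]] := repr_succ AZ.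
set X' := Hn d (N.+1 - p).
have AX' : Aoct_n d N X' by apply: H_An; lia.
have [X [AX e]] := IH (gsum W (gmul n X')) (cl_sum AW (gmul_in n (closed_An d N) AX')).
exists X; split => //.
apply: equivA_trans e _.
apply: equivA_trans _ (equivA_bis (bis_sym b)).
have cI := closed_A d.
apply: equivA_suml => //; first by apply: An_A AW.
apply: gmul_equiv => //; first by apply: An_A AX'.
  by apply: An_A (H_An _ (leqnn _)).
have := per (n := N.+1 - p) ltac:(rewrite /M in h; lia).
have -> : N.+1 - p + p = N.+1 by lia.
exact: equivA_sym.
Qed.

End Main.
Unset Implicit Arguments.

Theorem mainTheorem12 (d : nat -> nat) (k n0 p : nat) :
  (forall j, d j < 8) ->
  0 < k -> d k != 0 -> (forall j, k < j -> d j = 0) ->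
  0 < n0 -> 0 < p ->
  let M := 2 * n0 + 2 * p + k in
  (forall n, n0 <= n < 2 * n0 + p + k ->
     equivA (Aoct_n d M) (Hn d (n + p)) (Hn d n)) ->
  (exists iota : game -> game,
      bip_iso (Aoct_n d M) (Aoct d) iota /\
      (forall X, Aoct_n d M X -> equivA (Aoct d) (iota X) X)) /\
  (forall n, n0 <= n -> equivA (Aoct d) (Hn d (n + p)) (Hn d n)).
Proof.
move=> _ _ _ dk0 n0pos ppos M hyp; rewrite /M in hyp |- *.
split; last by move=> n hn; exact: per dk0 n0pos ppos hyp n hn.
exists (fun X => X); split; last by move=> X _; apply: equivA_refl.
split.
- by move=> X; apply: An_A.
- move=> X Y AX AY; split; first exact: lift_inf dk0 n0pos ppos hyp X Y AX AY.
  by apply: equivA_sub => x; apply: An_A.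
- move=> Z /A_An [N AN]; have [X [AX e]] := surj dk0 n0pos ppos hyp AN.
  by exists X.
- by split => [X Y _ _|]; apply: equivA_refl.
- move=> X AX; split.
  + case=> Y [AY e PY]; exists Y; split => //; first by apply: An_A AY.
    exact: lift_inf dk0 n0pos ppos hyp X Y AX AY e.
  + case=> Y [AY e PY]; exists X; split => //.
    have [A0 _ _] := closed_A d.
    by rewrite (equivA_isP A0 e).
Qed.
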